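(* Let $G$ be a tree and let $v\in V(G)$ be a vertex with $N_G(v)=\{v_1,\dots,v_r\}$, where $r\geq 2$ and $\deg_G(v_i)=1$ for all $i<r$. Let $e=\{v,v_r\}$. Then $$\nu_3(G\setminus N_G[e])\leq \nu_3(G)-1.$$
   Context: All graphs are finite and simple; a tree is a graph containing no cycle. $N_G(z)$ is the set of neighbors of $z$; for an edge $e=\{x,y\}$, $N_G[e]=N_G(x)\cup N_G(y)\cup\{x,y\}$, and $G\setminus N_G[e]$ is the induced subgraph of $G$ on $V(G)\setminus N_G[e]$. A $3$-path in $G$ is a sequence of three distinct vertices $a,b,c$ with $\{a,b\},\{b,c\}\in E(G)$. A $3$-path induced matching of $G$ is a collection of pairwise vertex-disjoint $3$-paths whose union is an induced subgraph of $G$ (the induced subgraph on the union of their vertices has no edges other than the path edges). $\nu_3(G)$ is the largest number of paths in a $3$-path induced matching of $G$. *)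

(* Defs.v *)
From mathcomp Require Import all_boot.
Set Implicit Arguments. Unset Strict Implicit. Unset Printing Implicit Defensive.

Section Graphs.
Variable T : finType.

Definition simple_graph (g : rel T) := symmetric g /\ irreflexive g.

Definition nbhd (g : rel T) (z : T) : {set T} := [set w | g z w].
Definition deg (g : rel T) (z : T) : nat := #|nbhd g z|.

Definition nbhd_edge (g : rel T) (x y : T) : {set T} :=
  nbhd g x :|: nbhd g y :|: [set x; y].

Definition has_cycle (g : rel T) :=
  exists p : seq T, [/\ 3 <= size p, uniq p & cycle g p].

Definition is_tree (g : rel T) :=
  [/\ simple_graph g, (forall x y, connect g x y) & ~ has_cycle g].

Definition path3 (g : rel T) (p : T * T * T) :=
  let: (a, b, c) := p in
  [&& a != b, b != c, a != c, g a b & g b c].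

Definition pverts (p : T * T * T) : {set T} :=
  let: (a, b, c) := p in [set a; b; c].

Definition pedge (p : T * T * T) (x y : T) :=
  let: (a, b, c) := p in
  [|| (x == a) && (y == b), (x == b) && (y == a),
      (x == b) && (y == c) | (x == c) && (y == b)].

(* P is a 3-path induced matching of the induced subgraph G[S]:
   every member is a 3-path inside S, distinct members are vertex-disjoint,
   and every edge of G between covered vertices is an edge of some path of P
   (i.e. the union of the paths is an induced subgraph). *)
Definition covered (P : {set T * T * T}) : {set T} := \bigcup_(p in P) pverts p.

Definition induced_3matching (g : rel T) (S : {set T}) (P : {set T * T * T}) :=
  [&& [forall p in P, path3 g p && (pverts p \subset S)],
      [forall p in P, forall q in P, (p != q) ==> [disjoint pverts p & pverts q]]
    & [forall x in covered P, forall y in covered P,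
         g x y ==> [exists p in P, pedge p x y]]].

Definition nu3 (g : rel T) (S : {set T}) : nat :=
  \max_(P : {set T * T * T} | induced_3matching g S P) #|P|.

End Graphs.

(* Main.v *)
Require Import Defs.
From mathcomp Require Import all_boot.

Theorem lemma4p3 (T : finType) (g : rel T) (v vr : T) :
  is_tree g ->
  g v vr ->
  2 <= deg g v ->
  (forall u, g v u -> u != vr -> deg g u = 1) ->
  nu3 g (~: nbhd_edge g v vr) + 1 <= nu3 g [set: T].
Proof.
move=> [[gsym girr] _ _] gvvr degv leaf.
set N := nbhd_edge g v vr.
have [u gvu uvr] : exists2 u, g v u & u != vr.
  have : 1 < #|nbhd g v| by [].
  case/card_gt1P => a [b [aN bN ab]].
  rewrite !inE in aN bN.
  case: (eqVneq a vr) => [av|av]; last by exists a.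
  by exists b => //; rewrite -av eq_sym.
have lf : forall y, g u y -> y = v.
  move=> y guy; have := leaf u gvu uvr; rewrite /deg => /eqP/cards1P [z Hz].
  have : v \in nbhd g u by rewrite inE gsym.
  have : y \in nbhd g u by rewrite inE.
  by rewrite Hz !inE => /eqP -> /eqP ->.
have vv : v != vr by apply/eqP => E; move: gvvr; rewrite -E girr.
have uv : u != v by apply/eqP => E; move: gvu; rewrite E girr.
have guvr : ~~ g u vr by apply/negP => /lf E; move: vv; rewrite E eqxx.
set p0 := (u, v, vr).
have p0N : pverts p0 \subset N.
  apply/subsetP => x; rewrite /p0 /= /N /nbhd_edge /nbhd !inE.
  by case/orP => [/orP [] |] => /eqP ->; rewrite ?gvu ?eqxx ?orbT.
have nbN : forall x y, x \in pverts p0 -> g x y -> y \in N.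
  move=> x y; rewrite /p0 /= /N /nbhd_edge /nbhd !inE.
  case/orP => [/orP [] |] => /eqP -> Hg; last by rewrite Hg !orbT.
    by rewrite (lf _ Hg) eqxx !orbT.
  by rewrite Hg.
pose S := ~: N.
have ne : 0 < #|[pred P | induced_3matching g S P]|.
  apply/card_gt0P; exists set0.
  rewrite inE /induced_3matching; apply/and3P; split.
  - by apply/forall_inP => p; rewrite inE.
  - by apply/forall_inP => p; rewrite inE.
  - by apply/forall_inP => x /bigcupP [p]; rewrite inE.
have [P0 HP0 E] := @eq_bigmax_cond _ [pred P | induced_3matching g S P]
    (fun P => #|P|) (ne).
have -> : nu3 g S = #|P0| by rewrite /nu3 -E; apply: eq_bigl => P.
rewrite inE in HP0.
case/and3P: HP0 => /forall_inP H1 /forall_inP H2 /forall_inP H3.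
have PS : forall p x, p \in P0 -> x \in pverts p -> x \notin N.
  move=> p x pP xp; case/andP: (H1 p pP) => _ /subsetP sub.
  by have := sub x xp; rewrite inE.
have p0P : p0 \notin P0.
  have vN : v \in N by rewrite /N /nbhd_edge !inE eqxx !orbT.
  apply/negP => pP.
  have vp : v \in pverts p0 by rewrite /p0 /= !inE eqxx orbT.
  by have := PS _ v pP vp; rewrite vN.
set Q := p0 |: P0.
have -> : #|P0| + 1 = #|Q|.
  rewrite cardsU1 p0P addnC //.
apply: leq_bigmax_cond.
rewrite /induced_3matching; apply/and3P; split.
- apply/forall_inP => p /setU1P [->|pP].
    rewrite subsetT andbT /p0 /path3 uv vv gvvr (gsym u v) gvu /=.
    by rewrite uvr.
  by case/andP: (H1 p pP) => -> _; rewrite subsetT.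
- apply/forall_inP => p pQ; apply/forall_inP => q qQ.
  move: pQ qQ => /setU1P [->|pP] /setU1P [->|qP]; apply/implyP => pq.
  + by rewrite eqxx in pq.
  + rewrite disjoints_subset; apply/subsetP => x xp; rewrite inE; apply/negP => xq; move/subsetP: p0N => /(_ x xp) xN.
    by have := PS _ _ qP xq; rewrite xN.
  + rewrite disjoints_subset; apply/subsetP => x xq; rewrite inE; apply/negP => xp; move/subsetP: p0N => /(_ x xp) xN.
    by have := PS _ _ pP xq; rewrite xN.
  + exact: (implyP (forall_inP (H2 p pP) q qP) pq).
- apply/forall_inP => x /bigcupP [p pQ xp]; apply/forall_inP => y /bigcupP [q qQ yq].
  apply/implyP => gxy.
  move: pQ qQ => /setU1P [pe|pP] /setU1P [qe|qP].
  + apply/exists_inP; exists p0; first by rewrite setU11.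
    move: xp yq; rewrite pe qe /p0 /pedge /= !inE.
    case/orP => [/orP [] |] => /eqP Ex; case/orP => [/orP [] |] => /eqP Ey; subst x y;
      move: gxy; rewrite ?girr // ?eqxx ?(negbTE uv) ?(negbTE vv) ?(negbTE uvr)
        ?(eq_sym v u) ?(eq_sym vr v) ?(eq_sym vr u) ?(negbTE uv) ?(negbTE vv) ?(negbTE uvr) //=.
    * by rewrite (negbTE guvr).
    * by rewrite gsym (negbTE guvr).
  + have xp0 : x \in pverts p0 by rewrite -pe.
    have := nbN _ _ xp0 gxy.
    by rewrite (negbTE (PS _ _ qP yq)).
  + rewrite gsym in gxy.
    have yp0 : y \in pverts p0 by rewrite -qe.
    have := nbN _ _ yp0 gxy.
    by rewrite (negbTE (PS _ _ pP xp)).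
  + have xc : x \in covered P0 by apply/bigcupP; exists p.
    have yc : y \in covered P0 by apply/bigcupP; exists q.
    case/exists_inP: (implyP (forall_inP (H3 x xc) y yc) gxy) => r rP Hr.
    by apply/exists_inP; exists r => //; rewrite setU1r.
Qed.
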